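(* Let $z=(x,\sigma)$ be a complete bounded solution of the hybrid system $\mathcal H=(C,f,D,g)$. For $j\in N$ let $t_{0,j}<t_{1,j}<t_{2,j}<\dots$ denote the successive (ordinary) time instants at which the value of $\sigma_j$ changes along the solution. Then there exists $\tau>0$ such that $t_{\ell+1,j}-t_{\ell,j}\ge\tau$ for all $\ell\ge1$ and all $j\in N$ (for which these instants exist).
   Context: Network model. $(N,E)$ is a connected directed graph with $N=\{1,\dots,|N|\}$, $E\subseteq N\times N$, with arbitrary orientation: if $(i,j)\in E$ then $(j,i)\notin E$. For $j\in N$, ''$i:i\to j$'' ranges over $i$ with $(i,j)\in E$ and ''$k:j\to k$'' over $k$ with $(j,k)\in E$. Constants: $M_j>0$, $p^L_j\in\mathbb{R}$ ($j\in N$), $B_{ij}>0$ ($(i,j)\in E$). Continuous state $x=(\eta,\omega,x^s)\in\mathbb{R}^n$ with $\eta_{ij}\in\mathbb{R}$ ($(i,j)\in E$), $\omega_j\in\mathbb{R}$, $x^s_j\in\mathbb{R}^{n_j}$ ($j\in N$), $n=|E|+|N|+\sum_jn_j$; $p_{ij}=B_{ij}\sin\eta_{ij}$, $s_j=g_j(x^s_j,-\omega_j)$, where $f_j:\mathbb{R}^{n_j}\times\mathbb{R}\to\mathbb{R}^{n_j}$, $g_j:\mathbb{R}^{n_j}\times\mathbb{R}\to\mathbb{R}$ are globally Lipschitz. Hysteretic loads as a hybrid system. For each $j$ constants $\overline d_j\ge0$ and thresholds $\omega^1_j>\omega^0_j>0$ are given. ${\rm sgn}(a)=1$ if $a\ge0$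 and $-1$ otherwise. The discrete state is $\sigma\in P^{|N|}$, $P=\{-1,0,1\}$, and $z=(x,\sigma)$. Let $\mathcal I_j(\omega_j)=\{{\rm sgn}(\omega_j)\}$ if $|\omega_j|>\omega^1_j$, $\{0\}$ if $|\omega_j|<\omega^0_j$, $\{0,{\rm sgn}(\omega_j)\}$ if $\omega^0_j\le|\omega_j|\le\omega^1_j$; $\Lambda=C=\{z\in\mathbb{R}^n\times P^{|N|}:\sigma_j\in\mathcal I_j(\omega_j)\ \forall j\}$. Flow map $f$ on $C$: $\dot\eta_{ij}=\omega_i-\omega_j$; $M_j\dot\omega_j=-p^L_j+s_j-\overline d_j\sigma_j-\sum_{k:j\to k}p_{jk}+\sum_{i:i\to j}p_{ij}$; $\dot x^s_j=f_j(x^s_j,-\omega_j)$; $\dot\sigma_j=0$. Jump set $D$: the set of $z\in\Lambda$ such that for some $j$, either ($|\omega_j|=\omega^1_j$ and $\sigma_j=0$) or ($|\omega_j|=\omega^0_j$ and $\sigma_j={\rm sgn}(\omega_j)$). Jump map $g$ on $D$: $x^+=x$; $\sigma_j^+={\rm sgn}(\omega_j)$ if $|\omega_j|=\omega^1_j$ and $\sigma_j=0$, $\sigma_j^+=0$ if $|\omega_j|=\omega^0_j$ and $\sigma_j={\rm sgn}(\omega_j)$, $\sigma_j^+=\sigma_j$ otherwise. Hybrid solutions. A hybrid time domain is a subset $K\subseteq\mathbb{R}_{\ge0}\times\mathbb{N}_0$ that is a union of a finite or infinite sequence of sets $[t_\ell,t_{\ell+1}]\times\{\ell\}$ ($0=t_0\le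 t_1\le\dots$), the last one (if any) possibly of the form $[t_\ell,t_{\ell+1})\times\{\ell\}$ or $[t_\ell,\infty)\times\{\ell\}$. A solution of $\mathcal H$ is a map $z:K\to\mathbb{R}^n\times P^{|N|}$ on a hybrid time domain with $z(0,0)\in C\cup D$, such that for each $\ell$, $t\mapsto z(t,\ell)$ is locally absolutely continuous on $T_\ell=\{t:(t,\ell)\in K\}$, and if $T_\ell$ has nonempty interior then $z(t,\ell)\in C$ for all $t$ in the interior and $\dot z(t,\ell)=f(z(t,\ell))$ for almost all $t\in T_\ell$; and whenever $(t,\ell),(t,\ell+1)\in K$, $z(t,\ell)\in D$ and $z(t,\ell+1)=g(z(t,\ell))$. A solution is complete if $K$ is unbounded, and bounded if its range is bounded. *)

(* Defs.v *)
From Stdlib Require Import Reals Lra Lia.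
Open Scope R_scope.

Fixpoint rsum (n : nat) (F : nat -> R) : R :=
  match n with O => 0 | S m => rsum m F + F m end.

Definition sgn (a : R) : R := if Rle_dec 0 a then 1 else -1.

(* Model data. Nodes are 0..nN-1 (the paper's 1..|N| shifted by one).
   Vectors x^s_j in R^{n_j} are represented as functions nat -> R, only
   the coordinates k < nx j being meaningful. *)
Record params := Params {
  nN   : nat;
  E    : nat -> nat -> bool;
  M    : nat -> R;
  pL   : nat -> R;
  B    : nat -> nat -> R;
  nx   : nat -> nat;
  fs   : nat -> (nat -> R) -> R -> (nat -> R);
  gs   : nat -> (nat -> R) -> R -> R;
  dbar : nat -> R;
  w0   : nat -> R;
  w1   : nat -> R
}.

Inductive ureach (P : params) : nat -> nat -> Prop :=
| ureach_refl : forall i, ureach P i i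
| ureach_fwd : forall i j k, E P i j = true -> ureach P j k -> ureach P i k
| ureach_bwd : forall i j k, E P j i = true -> ureach P j k -> ureach P i k.

Definition lipschitz_f (n : nat) (f : (nat -> R) -> R -> (nat -> R)) : Prop :=
  exists L : R, forall (a b : nat -> R) (u v : R),
    rsum n (fun k => Rabs (f a u k - f b v k))
      <= L * (rsum n (fun k => Rabs (a k - b k)) + Rabs (u - v)).

Definition lipschitz_g (n : nat) (g : (nat -> R) -> R -> R) : Prop :=
  exists L : R, forall (a b : nat -> R) (u v : R),
    Rabs (g a u - g b v)
      <= L * (rsum n (fun k => Rabs (a k - b k)) + Rabs (u - v)).

Definition standing (P : params) : Prop :=
  (forall i j, E P i j = true -> (i < nN P)%nat /\ (j < nN P)%nat) /\
  (forall i j, E P i j = true -> E P j i = false) /\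
  (forall i j, (i < nN P)%nat -> (j < nN P)%nat -> ureach P i j) /\
  (forall j, (j < nN P)%nat -> 0 < M P j) /\
  (forall i j, E P i j = true -> 0 < B P i j) /\
  (forall j, (j < nN P)%nat -> lipschitz_f (nx P j) (fs P j)) /\
  (forall j, (j < nN P)%nat -> lipschitz_g (nx P j) (gs P j)) /\
  (forall j, (j < nN P)%nat -> 0 <= dbar P j) /\
  (forall j, (j < nN P)%nat -> 0 < w0 P j /\ w0 P j < w1 P j).

(* Hybrid state z = (x, sigma), x = (eta, omega, x^s). sigma_j is a real
   number in P = {-1,0,1}. *)
Record state := State {
  eta   : nat -> nat -> R;
  omega : nat -> R;
  xs    : nat -> nat -> R;
  sigma : nat -> R
}.

Inductive comp := Ceta (i j : nat) | Comega (j : nat) | Cxs (j k : nat) | Csig (j : nat).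

Definition relevant (P : params) (c : comp) : Prop :=
  match c with
  | Ceta i j => E P i j = true
  | Comega j => (j < nN P)%nat
  | Cxs j k => (j < nN P)%nat /\ (k < nx P j)%nat
  | Csig j => (j < nN P)%nat
  end.

Definition proj (c : comp) (z : state) : R :=
  match c with
  | Ceta i j => eta z i j
  | Comega j => omega z j
  | Cxs j k => xs z j k
  | Csig j => sigma z j
  end.

Definition inI (a b w s : R) : Prop :=
  (b < Rabs w /\ s = sgn w) \/
  (Rabs w < a /\ s = 0) \/
  (a <= Rabs w <= b /\ (s = 0 \/ s = sgn w)).

Definition inC (P : params) (z : state) : Prop :=
  forall j, (j < nN P)%nat -> inI (w0 P j) (w1 P j) (omega z j) (sigma z j).

Definition inD (P : params) (z : state) : Prop :=
  inC P z /\
  exists j, (j < nN P)%nat /\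
    ((Rabs (omega z j) = w1 P j /\ sigma z j = 0) \/
     (Rabs (omega z j) = w0 P j /\ sigma z j = sgn (omega z j))).

Definition gsig (P : params) (z : state) (j : nat) : R :=
  if Nat.ltb j (nN P) then
    if Req_dec_T (Rabs (omega z j)) (w1 P j) then
      if Req_dec_T (sigma z j) 0 then sgn (omega z j) else
      if Req_dec_T (Rabs (omega z j)) (w0 P j) then
        (if Req_dec_T (sigma z j) (sgn (omega z j)) then 0 else sigma z j)
      else sigma z j
    else if Req_dec_T (Rabs (omega z j)) (w0 P j) then
      (if Req_dec_T (sigma z j) (sgn (omega z j)) then 0 else sigma z j)
    else sigma z j
  else sigma z j.

Definition gmap (P : params) (z : state) : state :=
  State (eta z) (omega z) (xs z) (gsig P z).

Definition omega_rhs (P : params) (z : state) (j : nat) : R :=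
  - pL P j + gs P j (xs z j) (- omega z j) - dbar P j * sigma z j
  - rsum (nN P) (fun k => if E P j k then B P j k * sin (eta z j k) else 0)
  + rsum (nN P) (fun i => if E P i j then B P i j * sin (eta z i j) else 0).

Definition fmap (P : params) (z : state) (c : comp) : R :=
  match c with
  | Ceta i j => omega z i - omega z j
  | Comega j => omega_rhs P z j / M P j
  | Cxs j k => fs P j (xs z j) (- omega z j) k
  | Csig j => 0
  end.

Inductive last_kind := LClosed | LOpen | LInfinite.

Definition last_interval (lk : last_kind) (a b s : R) : Prop :=
  match lk with
  | LClosed => a <= s <= b
  | LOpen => a <= s < b
  | LInfinite => a <= s
  end.

Definition hybrid_time_domain (K : R -> nat -> Prop) : Prop :=
  exists t : nat -> R, t O = 0 /\ (forall l, t l <= t (S l)) /\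
   ((forall s l, K s l <-> t l <= s <= t (S l)) \/
    (exists (J : nat) (lk : last_kind), forall s l,
        K s l <-> ((l < J)%nat /\ t l <= s <= t (S l)) \/
                  (l = J /\ last_interval lk (t J) (t (S J)) s))).

Definition null_set (S : R -> Prop) : Prop :=
  forall eps, 0 < eps -> exists u v : nat -> R,
    (forall k, u k <= v k) /\
    (forall t, S t -> exists k, u k < t < v k) /\
    (forall n, rsum n (fun k => v k - u k) <= eps).

Definition abs_cont_on (F : R -> R) (a b : R) : Prop :=
  forall eps, 0 < eps -> exists delta, 0 < delta /\
    forall (n : nat) (u v : nat -> R),
      (forall k, (k < n)%nat -> a <= u k <= v k /\ v k <= b) ->
      (forall k, (S k < n)%nat -> v k <= u (S k)) ->
      rsum n (fun k => v k - u k) < delta ->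
      rsum n (fun k => Rabs (F (v k) - F (u k))) < eps.

Definition interior_pt (T : R -> Prop) (t : R) : Prop :=
  exists e, 0 < e /\ forall s, Rabs (s - t) < e -> T s.

Definition is_solution (P : params) (K : R -> nat -> Prop)
    (z : R -> nat -> state) : Prop :=
  hybrid_time_domain K /\
  K 0 O /\ (inC P (z 0 O) \/ inD P (z 0 O)) /\
  (forall l : nat,
     (forall a b, a <= b -> (forall s, a <= s <= b -> K s l) ->
        forall c, relevant P c -> abs_cont_on (fun s => proj c (z s l)) a b) /\
     ((exists t, interior_pt (fun s => K s l) t) ->
        (forall t, interior_pt (fun s => K s l) t -> inC P (z t l)) /\
        null_set (fun t => interior_pt (fun s => K s l) t /\
           ~ (forall c, relevant P c ->
                derivable_pt_lim (fun s => proj c (z s l)) t (fmap P (z t l) c))))) /\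
  (forall t l, K t l -> K t (S l) ->
     inD P (z t l) /\ z t (S l) = gmap P (z t l)).

Definition complete (K : R -> nat -> Prop) : Prop :=
  forall r, exists t l, K t l /\ r <= t + INR l.

Definition bounded_sol (P : params) (K : R -> nat -> Prop)
    (z : R -> nat -> state) : Prop :=
  exists bd, forall t l c, K t l -> relevant P c -> Rabs (proj c (z t l)) <= bd.

Definition sigma_change (K : R -> nat -> Prop) (z : R -> nat -> state)
    (j : nat) (t : R) : Prop :=
  exists l, K t l /\ K t (S l) /\ sigma (z t (S l)) j <> sigma (z t l) j.

(* Main.v *)
Require Import Defs.
From Stdlib Require Import Reals Lra Lia Classical Arith.
Open Scope R_scope.

Lemma rsum_ext n F G : (forall k, (k<n)%nat -> F k = G k) -> rsum n F = rsum n G.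
Proof. induction n; intros H; simpl; auto. rewrite IHn by (intros; apply H; lia). rewrite H by lia. reflexivity. Qed.

Lemma rsum_le n F G : (forall k, (k<n)%nat -> F k <= G k) -> rsum n F <= rsum n G.
Proof. induction n; intros H; simpl; [lra|]. apply Rplus_le_compat; [apply IHn; intros; apply H; lia| apply H; lia]. Qed.

Lemma rsum_nonneg n F : (forall k, (k<n)%nat -> 0 <= F k) -> 0 <= rsum n F.
Proof. induction n; intros H; simpl; [lra|]. assert (0 <= F n) by (apply H; lia). assert (0 <= rsum n F) by (apply IHn; intros; apply H; lia). lra. Qed.

Lemma rsum_plus n F G : rsum n (fun k => F k + G k) = rsum n F + rsum n G.
Proof. induction n; simpl; [lra|]. rewrite IHn. lra. Qed.

Lemma rsum_mono_n n n' F : (n <= n')%nat -> (forall k, 0 <= F k) -> rsum n F <= rsum n' F.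
Proof. intros H HF. induction H; simpl; [lra|]. specialize (HF m). lra. Qed.

Lemma rsum_single n F k : (k<n)%nat -> (forall i, 0 <= F i) -> F k <= rsum n F.
Proof. induction n; intros Hk HF; [lia|]. simpl. destruct (Nat.eq_dec k n).
 - subst. assert (0 <= rsum n F) by (apply rsum_nonneg; auto). lra.
 - assert (F k <= rsum n F) by (apply IHn; auto; lia). specialize (HF n). lra. Qed.

Lemma rsum_abs n F G : (forall k, (k<n)%nat -> Rabs (F k) <= G k) -> Rabs (rsum n F) <= rsum n G.
Proof. induction n; intros H; simpl. rewrite Rabs_R0; lra.
 eapply Rle_trans; [apply Rabs_triang|]. apply Rplus_le_compat; [apply IHn; intros; apply H; lia| apply H; lia]. Qed.

Lemma rsum_shift n f : rsum (S n) f = f O + rsum n (fun k => f (S k)).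
Proof. induction n. simpl; lra. change (rsum (S (S n)) f) with (rsum (S n) f + f (S n)). rewrite IHn. simpl. lra. Qed.

Lemma abs_le_inv x c : Rabs x <= c -> -c <= x <= c.
Proof. unfold Rabs; destruct Rcase_abs; lra. Qed.

Definition clip (u v x y : R) : R := Rmax 0 (Rmin v y - Rmax u x).

Lemma clip_add u v x y w : u <= v -> x <= y -> y <= w ->
  clip u v x w = clip u v x y + clip u v y w.
Proof. intros. unfold clip, Rmax, Rmin. repeat destruct Rle_dec; lra. Qed.

Lemma clip_nonneg u v x y : 0 <= clip u v x y.
Proof. unfold clip. apply Rmax_l. Qed.

Lemma clip_le u v x y : u <= v -> clip u v x y <= v - u.
Proof. intros. unfold clip, Rmax, Rmin. repeat destruct Rle_dec; lra. Qed.

Lemma clip_full u v x y : u <= x -> x <= y -> y <= v -> clip u v x y = y - x.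
Proof. intros. unfold clip, Rmax, Rmin. repeat destruct Rle_dec; lra. Qed.

Lemma lub_approx (A : R -> Prop) s e : is_lub A s -> 0 < e -> exists x, A x /\ s - e < x /\ x <= s.
Proof.
  intros [Hub Hl] He. apply NNPP; intro Hn.
  assert (is_upper_bound A (s - e)).
  { intros x Ax. destruct (Rle_dec x (s-e)); auto. exfalso; apply Hn; exists x; split; [auto|split; [lra| apply Hub; auto]]. }
  specialize (Hl _ H). lra.
Qed.

Lemma null_ext (Sx : R -> Prop) c : null_set Sx -> null_set (fun t => Sx t \/ t = c).
Proof.
  intros HS eps He. destruct (HS (eps/2)) as [u [v [H1 [H2 H3]]]]; [lra|].
  exists (fun k => match k with O => c - eps/4 | S k => u k end).
  exists (fun k => match k with O => c + eps/4 | S k => v k end).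
  split; [intros [|k]; [lra|apply H1]|split].
  - intros t [Ht|Ht]. + destruct (H2 t Ht) as [k Hk]. exists (S k). exact Hk. + exists O. lra.
  - intros [|n]. simpl; lra. rewrite rsum_shift. specialize (H3 n). simpl. lra.
Qed.

Definition Ainv (F : R -> R) (a b L : R) (u v : nat -> R) (x : R) : Prop :=
  a <= x <= b /\ exists n m (p q : nat -> R),
   (forall i, (i<m)%nat -> a <= p i <= q i /\ q i <= x) /\
   (forall i, (S i < m)%nat -> q i <= p (S i)) /\
   rsum m (fun i => q i - p i) <= rsum n (fun k => clip (u k) (v k) a x) /\
   F x - F a <= L*(x-a) + rsum m (fun i => Rabs (F (q i) - F (p i))).

Lemma Ainv_mono F a b L u v x y : (forall k, u k <= v k) ->
  Ainv F a b L u v x -> x <= y <= b -> F y - F x <= L*(y-x) -> Ainv F a b L u v y.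
Proof.
  intros Huv [Hx [n [m [p [q [H1 [H2 [H3 H4]]]]]]]] Hy HF.
  split; [lra|]. exists n, m, p, q. split; [|split; [auto|split]].
  - intros i Hi. destruct (H1 i Hi). lra.
  - eapply Rle_trans; [apply H3|]. apply rsum_le. intros k _.
    rewrite (clip_add (u k) (v k) a x y) by (auto; lra). pose proof (clip_nonneg (u k) (v k) x y). lra.
  - assert (L*(y-a) = L*(x-a) + L*(y-x)) by ring. lra.
Qed.

Lemma Ainv_ext F a b L u v x y k : (forall k, u k <= v k) -> 0 <= L ->
  Ainv F a b L u v x -> x <= y <= b -> u k <= x -> y <= v k -> Ainv F a b L u v y.
Proof.
  intros Huv HL [Hx [n [m [p [q [H1 [H2 [H3 H4]]]]]]]] Hy Hux Hyv.
  split; [lra|]. exists (Nat.max n (S k)), (S m),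
    (fun i => if Nat.ltb i m then p i else x), (fun i => if Nat.ltb i m then q i else y).
  split; [|split; [|split]].
  - intros i Hi. destruct (Nat.ltb_spec i m). destruct (H1 i); auto; lra. lra.
  - intros i Hi. destruct (Nat.ltb_spec i m); [|lia]. destruct (Nat.ltb_spec (S i) m).
    apply H2; auto. assert (S i = m) by lia. subst m. destruct (H1 i); auto; lra.
  - change (rsum (S m) (fun i => (if Nat.ltb i m then q i else y) - (if Nat.ltb i m then p i else x)))
      with (rsum m (fun i => (if Nat.ltb i m then q i else y) - (if Nat.ltb i m then p i else x))
            + ((if Nat.ltb m m then q m else y) - (if Nat.ltb m m then p m else x))).
    rewrite Nat.ltb_irrefl.
    rewrite (rsum_ext m _ (fun i => q i - p i)) by (intros i Hi; destruct (Nat.ltb_spec i m); [reflexivity|lia]).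
    rewrite (rsum_ext _ (fun k0 => clip (u k0) (v k0) a y)
              (fun k0 => clip (u k0) (v k0) a x + clip (u k0) (v k0) x y))
      by (intros; apply clip_add; auto; lra).
    rewrite rsum_plus.
    assert (rsum n (fun k0 => clip (u k0) (v k0) a x) <= rsum (Nat.max n (S k)) (fun k0 => clip (u k0) (v k0) a x))
      by (apply rsum_mono_n; [lia| intros; apply clip_nonneg]).
    assert (clip (u k) (v k) x y <= rsum (Nat.max n (S k)) (fun k0 => clip (u k0) (v k0) x y))
      by (apply (rsum_single _ (fun k0 => clip (u k0) (v k0) x y)); [lia| intros; apply clip_nonneg]).
    rewrite clip_full in H0 by lra. lra.
  - change (rsum (S m) (fun i => Rabs (F (if Nat.ltb i m then q i else y) - F (if Nat.ltb i m then p i else x))))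
      with (rsum m (fun i => Rabs (F (if Nat.ltb i m then q i else y) - F (if Nat.ltb i m then p i else x)))
            + Rabs (F (if Nat.ltb m m then q m else y) - F (if Nat.ltb m m then p m else x))).
    rewrite Nat.ltb_irrefl.
    rewrite (rsum_ext m _ (fun i => Rabs (F (q i) - F (p i)))) by (intros i Hi; destruct (Nat.ltb_spec i m); [reflexivity|lia]).
    pose proof (Rle_abs (F y - F x)).
    assert (L*(y-a) = L*(x-a) + L*(y-x)) by ring. assert (0 <= L*(y-x)) by (apply Rmult_le_pos; lra). lra.
Qed.

Lemma deriv_upper F s d eta del : 0 < eta ->
  (forall h, h <> 0 -> Rabs h < del -> Rabs ((F (s+h) - F s)/h - d) < eta) ->
  forall y, s < y -> y - s < del -> F y - F s <= (d+eta)*(y-s).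
Proof.
  intros He H y Hy Hd. specialize (H (y - s)). replace (s + (y-s)) with y in H by ring.
  assert (Hh : y - s <> 0) by lra. specialize (H Hh). rewrite Rabs_right in H by lra. specialize (H Hd).
  apply Rlt_le, abs_le_inv in H.
  set (r := (F y - F s)/(y-s)) in H. assert (F y - F s = r * (y - s)) by (unfold r; field; lra). nra.
Qed.

Lemma deriv_lower F s d eta del : 0 < eta ->
  (forall h, h <> 0 -> Rabs h < del -> Rabs ((F (s+h) - F s)/h - d) < eta) ->
  forall x, x < s -> s - x < del -> F s - F x <= (d+eta)*(s-x).
Proof.
  intros He H x Hx Hd. specialize (H (x - s)). replace (s + (x-s)) with x in H by ring.
  assert (Hh : x - s <> 0) by lra. specialize (H Hh). rewrite Rabs_left in H by lra.
  assert (- (x - s) < del) by lra. specialize (H H0).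
  apply Rlt_le, abs_le_inv in H.
  set (r := (F x - F s)/(x-s)) in H. assert (F x - F s = r * (x - s)) by (unfold r; field; lra). nra.
Qed.

Lemma ac_upper_eps (F : R -> R) (a b L : R) (N : R -> Prop) :
  a < b -> 0 <= L -> abs_cont_on F a b -> null_set N ->
  (forall t, a < t < b -> ~ N t -> exists d, derivable_pt_lim F t d /\ d <= L) ->
  forall eps eta, 0 < eps -> 0 < eta -> F b - F a < (L+eta)*(b-a) + eps.
Proof.
  intros Hab HL Hac HN Hd eps eta He Heta.
  destruct (Hac eps He) as [dl [Hdl Hdl']].
  assert (HN' : null_set (fun t => (N t \/ t = a) \/ t = b)) by (apply null_ext, null_ext; auto).
  destruct (HN' (dl/2)) as [u [v [Huv [Hcov Hsum]]]]; [lra|].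
  set (A := Ainv F a b (L+eta) u v).
  assert (HAa : A a).
  { split; [lra|]. exists O, O, (fun _ => a), (fun _ => a). simpl. split; [intros; lia|split; [intros; lia|]]. lra. }
  assert (Hbnd : bound A). { exists b. intros x [Hx _]. lra. }
  destruct (completeness A Hbnd (ex_intro _ a HAa)) as [s Hs].
  assert (Has : a <= s) by (apply (proj1 Hs); auto).
  assert (Hsb : s <= b) by (apply (proj2 Hs); intros x [Hx _]; lra).
  assert (HAb : A b).
  { destruct (classic ((N s \/ s = a) \/ s = b)) as [Hbad|Hgood].
    - destruct (Hcov s Hbad) as [k Hk].
      assert (exists x, A x /\ u k <= x <= s) as [x [HAx Hx]].
      { destruct (Req_dec s a) as [E|E].
        - exists a. split; auto. lra.
        - destruct (lub_approx A s (s - Rmax (u k) a) Hs) as [x [Ax [Hx1 Hx2]]].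
          + unfold Rmax; destruct Rle_dec; lra.
          + exists x. split; auto. split; [|lra]. pose proof (Rmax_l (u k) a). lra. }
      assert (HAy : A (Rmin (v k) b)).
      { apply (Ainv_ext F a b (L+eta) u v x (Rmin (v k) b) k Huv); try lra; auto.
        split; [unfold Rmin; destruct Rle_dec; lra| apply Rmin_r]. apply Rmin_l. }
      unfold Rmin in HAy. destruct Rle_dec as [Hvb|Hvb]; auto.
      assert (v k <= s) by (apply (proj1 Hs); auto). lra.
    - assert (Has' : a < s) by (destruct (Req_dec s a); [exfalso; apply Hgood; auto|lra]).
      assert (Hsb' : s < b) by (destruct (Req_dec s b); [exfalso; apply Hgood; auto|lra]).
      destruct (Hd s (conj Has' Hsb')) as [d [Hder HdL]]; [tauto|].
      destruct (Hder eta Heta) as [del Hdel].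
      assert (Hdp : 0 < del) by apply cond_pos.
      destruct (lub_approx A s (Rmin del (s - a)) Hs) as [x [Ax [Hx1 Hx2]]].
      { unfold Rmin; destruct Rle_dec; lra. }
      set (y := s + Rmin (del/2) ((b - s)/2)).
      assert (Hy1 : s < y) by (unfold y, Rmin; destruct Rle_dec; lra).
      assert (Hy2 : y < b) by (unfold y, Rmin; destruct Rle_dec; lra).
      assert (Hy3 : y - s < del) by (unfold y, Rmin; destruct Rle_dec; lra).
      assert (F y - F s <= (d+eta)*(y-s)) by (eapply deriv_upper; eauto).
      assert (F s - F x <= (d+eta)*(s-x)).
      { destruct (Req_dec x s) as [E|E]. subst x. lra.
        eapply deriv_lower; eauto. lra. pose proof (Rmin_l del (s-a)). lra. }
      assert (A y).
      { apply (Ainv_mono F a b (L+eta) u v x y Huv); auto. lra.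
        assert ((d+eta)*(y-s) <= (L+eta)*(y-s)) by (apply Rmult_le_compat_r; lra).
        assert ((d+eta)*(s-x) <= (L+eta)*(s-x)) by (apply Rmult_le_compat_r; lra).
        assert ((L+eta)*(y-x) = (L+eta)*(y-s) + (L+eta)*(s-x)) by ring. lra. }
      assert (y <= s) by (apply (proj1 Hs); auto). lra. }
  destruct HAb as [_ [n [m [p [q [H1 [H2 [H3 H4]]]]]]]].
  assert (rsum n (fun k => clip (u k) (v k) a b) <= rsum n (fun k => v k - u k))
    by (apply rsum_le; intros; apply clip_le; auto).
  specialize (Hsum n).
  assert (rsum m (fun k => Rabs (F (q k) - F (p k))) < eps).
  { apply Hdl'; auto. lra. }
  lra.
Qed.

Lemma ac_upper (F : R -> R) (a b L : R) (N : R -> Prop) :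
  a <= b -> 0 <= L -> abs_cont_on F a b -> null_set N ->
  (forall t, a < t < b -> ~ N t -> exists d, derivable_pt_lim F t d /\ d <= L) ->
  F b - F a <= L * (b - a).
Proof.
  intros Hab HL Hac HN Hd. destruct (Req_dec a b) as [E|E]. subst. lra.
  assert (a < b) by lra.
  apply Rnot_lt_le. intro Hc. set (gap := F b - F a - L*(b-a)).
  assert (Hg : 0 < gap) by (unfold gap; lra).
  pose proof (ac_upper_eps F a b L N H HL Hac HN Hd (gap/2) (gap/(2*(b-a)))) as K.
  assert (gap / (2*(b-a)) > 0) by (apply Rdiv_lt_0_compat; lra).
  specialize (K ltac:(lra) ltac:(lra)).
  assert ((L + gap/(2*(b-a)))*(b-a) = L*(b-a) + gap/2) by (field; lra).
  unfold gap in *. lra.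
Qed.

Lemma ac_opp F a b : abs_cont_on F a b -> abs_cont_on (fun x => - F x) a b.
Proof.
  intros H eps He. destruct (H eps He) as [d [Hd Hd']]. exists d. split; auto.
  intros n u v H1 H2 H3. rewrite (rsum_ext n _ (fun k => Rabs (F (v k) - F (u k)))).
  apply Hd'; auto. intros k _. rewrite <- Rabs_Ropp. f_equal. ring.
Qed.

Lemma ac_abs (F : R -> R) (a b L : R) (N : R -> Prop) :
  a <= b -> 0 <= L -> abs_cont_on F a b -> null_set N ->
  (forall t, a < t < b -> ~ N t -> exists d, derivable_pt_lim F t d /\ Rabs d <= L) ->
  Rabs (F b - F a) <= L * (b - a).
Proof.
  intros Hab HL Hac HN Hd. apply Rabs_le. split.
  - assert ((fun x => - F x) b - (fun x => - F x) a <= L*(b-a)).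
    { apply (ac_upper (fun x => - F x) a b L N); auto. apply ac_opp; auto.
      intros t Ht Hn. destruct (Hd t Ht Hn) as [d [D1 D2]]. exists (-d). split.
      apply (derivable_pt_lim_opp F t d D1). apply abs_le_inv in D2. lra. }
    simpl in H. lra.
  - apply (ac_upper _ a b L N); auto.
    intros t Ht Hn. destruct (Hd t Ht Hn) as [d [D1 D2]]. exists d. split; auto.
    apply abs_le_inv in D2. lra.
Qed.

Lemma tmono (t : nat -> R) : (forall l, t l <= t (S l)) -> forall a b, (a <= b)%nat -> t a <= t b.
Proof. intros H a b Hab. induction Hab; [lra|]. specialize (H m). lra. Qed.

Section Dom.
Variable K : R -> nat -> Prop.
Hypothesis HK : hybrid_time_domain K.

Lemma li_lo lk a b s : last_interval lk a b s -> a <= s.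
Proof. destruct lk; simpl; lra. Qed.

Lemma D1 x y a b : K x a -> K y b -> (a < b)%nat -> x <= y.
Proof.
  destruct HK as [t [_ [Hm [Hi|[J [lk Hf]]]]]]; intros Hx Hy Hab.
  - apply Hi in Hx. apply Hi in Hy. pose proof (tmono t Hm (S a) b ltac:(lia)). lra.
  - apply Hf in Hx. apply Hf in Hy. pose proof (tmono t Hm (S a) b ltac:(lia)).
    destruct Hy as [[Hb Hy]|[Hb Hy]]; destruct Hx as [[Ha Hx]|[Ha Hx]]; try lia.
    + lra.
    + apply li_lo in Hy. subst. lra.
Qed.

Lemma D2 x y r a : K x a -> K y a -> x <= r <= y -> K r a.
Proof.
  destruct HK as [t [_ [Hm [Hi|[J [lk Hf]]]]]]; intros Hx Hy Hr.
  - apply Hi in Hx. apply Hi in Hy. apply Hi. lra.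
  - apply Hf in Hx. apply Hf in Hy. apply Hf.
    destruct Hy as [[Hb Hy]|[Hb Hy]]; destruct Hx as [[Ha Hx]|[Ha Hx]]; try lia.
    + left. split; auto; lra.
    + right. split; auto. destruct lk; simpl in *; lra.
Qed.

Lemma D3 y b m : K y b -> (m < b)%nat -> exists q, K q m /\ K q (S m).
Proof.
  destruct HK as [t [_ [Hm [Hi|[J [lk Hf]]]]]]; intros Hy Hb; exists (t (S m)).
  - split; apply Hi; pose proof (Hm m); pose proof (Hm (S m)); lra.
  - apply Hf in Hy. split; apply Hf.
    + left. split. destruct Hy as [[? ?]|[? ?]]; lia. specialize (Hm m); lra.
    + destruct (Nat.lt_ge_cases (S m) J).
      * left. split; auto. specialize (Hm (S m)); lra.
      * right. destruct Hy as [[? ?]|[Hbj Hy]]; [lia|]. assert (S m = J) by lia.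
        split; auto. rewrite H0. subst b. destruct lk; simpl in *; lra.
Qed.

Lemma D4 r y m : K r m -> K r (S m) -> K y (S m) -> r <= y.
Proof.
  destruct HK as [t [_ [Hm [Hi|[J [lk Hf]]]]]]; intros H1 H2 H3.
  - apply Hi in H1. apply Hi in H3. lra.
  - apply Hf in H1. apply Hf in H3.
    destruct H1 as [[? ?]|[? ?]].
    + destruct H3 as [[? ?]|[HJ Hy]]. lra. apply li_lo in Hy. rewrite <- HJ in Hy. lra.
    + apply Hf in H2. destruct H2 as [[? ?]|[? ?]]; lia.
Qed.

Lemma Dge x y a b : K x a -> K x (S a) -> K y b -> (S a <= b)%nat -> x <= y.
Proof.
  intros H1 H2 H3 Hb. destruct (Nat.eq_dec (S a) b).
  - subst b. exact (D4 x y a H1 H2 H3).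
  - eapply D1; [exact H2| exact H3| lia].
Qed.
End Dom.

Lemma sgn_nz a : sgn a <> 0.
Proof. unfold sgn; destruct Rle_dec; lra. Qed.

Lemma gsig_change P zz j : (j < nN P)%nat -> gsig P zz j <> Defs.sigma zz j ->
  (Rabs (omega zz j) = w1 P j /\ Defs.sigma zz j = 0 /\ gsig P zz j = sgn (omega zz j)) \/
  (Rabs (omega zz j) = w0 P j /\ Defs.sigma zz j = sgn (omega zz j) /\ gsig P zz j = 0).
Proof.
  intros Hj. unfold gsig. destruct (Nat.ltb_spec j (nN P)); [|lia].
  repeat destruct Req_dec_T; intros Hc; try (exfalso; apply Hc; reflexivity); auto.
Qed.

Lemma min_ex (Q : nat -> Prop) n : Q n -> exists m, Q m /\ forall k, (k < m)%nat -> ~ Q k.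
Proof.
  induction n as [n IH] using lt_wf_ind. intros Hn.
  destruct (classic (exists k, (k < n)%nat /\ Q k)) as [[k [Hk Qk]]|Hno].
  - exact (IH k Hk Qk).
  - exists n. split; auto. intros k Hk Qk. apply Hno. eauto.
Qed.

Lemma fin_min (Q : nat -> R -> Prop) n :
  (forall j c c', Q j c -> 0 < c' <= c -> Q j c') ->
  (forall j, (j < n)%nat -> exists c, 0 < c /\ Q j c) ->
  exists c, 0 < c /\ forall j, (j < n)%nat -> Q j c.
Proof.
  intros Hdown. induction n; intros H.
  - exists 1. split; [lra| intros; lia].
  - destruct IHn as [c1 [Hc1 Q1]]. intros; apply H; lia.
    destruct (H n ltac:(lia)) as [c2 [Hc2 Q2]].
    exists (Rmin c1 c2). split. unfold Rmin; destruct Rle_dec; lra.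
    intros j Hj. destruct (Nat.eq_dec j n).
    + subst. apply (Hdown _ c2); auto. split. unfold Rmin; destruct Rle_dec; lra. apply Rmin_r.
    + apply (Hdown _ c1); auto. apply Q1; lia. split. unfold Rmin; destruct Rle_dec; lra. apply Rmin_l.
Qed.

Lemma rhs_bound P (HP : standing P) K z (Hbd : bounded_sol P K z) j (Hj : (j < nN P)%nat) :
  exists Lj, 0 <= Lj /\ forall t l, K t l -> Rabs (omega_rhs P (z t l) j / M P j) <= Lj.
Proof.
  destruct HP as [HE [Hasym [Hconn [HM [HB [Hf [Hg [Hd Hw]]]]]]]].
  destruct Hbd as [bd Hbd].
  destruct (Hg j Hj) as [Lg HLg].
  set (Cx := rsum (nx P j) (fun _ => bd)).
  set (SB1 := rsum (nN P) (fun k => Rabs (B P j k))).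
  set (SB2 := rsum (nN P) (fun k => Rabs (B P k j))).
  set (R0 := Rabs (pL P j) + (Rabs (gs P j (fun _ => 0) 0) + Rabs Lg * (Cx + bd))
             + Rabs (dbar P j) * bd + SB1 + SB2).
  exists (Rmax 0 (R0 / M P j)). split. apply Rmax_l.
  intros t l Htl. set (zz := z t l).
  assert (Hom : Rabs (omega zz j) <= bd) by (apply (Hbd t l (Comega j)); auto).
  assert (Hsg : Rabs (Defs.sigma zz j) <= bd) by (apply (Hbd t l (Csig j)); auto).
  assert (Hxs : rsum (nx P j) (fun k => Rabs (xs zz j k - 0)) <= Cx).
  { apply rsum_le. intros k Hk. rewrite Rminus_0_r. apply (Hbd t l (Cxs j k)); auto. simpl; auto. }
  assert (Hxs0 : 0 <= rsum (nx P j) (fun k => Rabs (xs zz j k - 0))) by (apply rsum_nonneg; intros; apply Rabs_pos).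
  assert (HG : Rabs (gs P j (xs zz j) (- omega zz j)) <= Rabs (gs P j (fun _ => 0) 0) + Rabs Lg * (Cx + bd)).
  { pose proof (HLg (xs zz j) (fun _ => 0) (- omega zz j) 0) as H.
    assert (Rabs (- omega zz j - 0) <= bd) by (rewrite Rminus_0_r, Rabs_Ropp; auto).
    set (X := rsum (nx P j) (fun k => Rabs (xs zz j k - 0)) + Rabs (- omega zz j - 0)) in H.
    assert (0 <= X) by (unfold X; pose proof (Rabs_pos (- omega zz j - 0)); lra).
    assert (Lg * X <= Rabs Lg * X) by (apply Rmult_le_compat_r; auto; apply Rle_abs).
    assert (Rabs Lg * X <= Rabs Lg * (Cx + bd)) by (apply Rmult_le_compat_l; [apply Rabs_pos| unfold X; lra]).
    pose proof (Rabs_triang_inv (gs P j (xs zz j) (- omega zz j)) (gs P j (fun _ => 0) 0)). lra. }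
  assert (HS1 : Rabs (rsum (nN P) (fun k => if E P j k then B P j k * sin (eta zz j k) else 0)) <= SB1).
  { apply rsum_abs. intros k _. destruct (E P j k).
    - rewrite Rabs_mult. assert (Rabs (sin (eta zz j k)) <= 1) by (apply Rabs_le, SIN_bound).
      pose proof (Rabs_pos (B P j k)). pose proof (Rabs_pos (sin (eta zz j k))). nra.
    - rewrite Rabs_R0. apply Rabs_pos. }
  assert (HS2 : Rabs (rsum (nN P) (fun i => if E P i j then B P i j * sin (eta zz i j) else 0)) <= SB2).
  { apply rsum_abs. intros k _. destruct (E P k j).
    - rewrite Rabs_mult. assert (Rabs (sin (eta zz k j)) <= 1) by (apply Rabs_le, SIN_bound).
      pose proof (Rabs_pos (B P k j)). pose proof (Rabs_pos (sin (eta zz k j))). nra.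
    - rewrite Rabs_R0. apply Rabs_pos. }
  assert (HDS : Rabs (dbar P j * Defs.sigma zz j) <= Rabs (dbar P j) * bd).
  { rewrite Rabs_mult. apply Rmult_le_compat_l; auto. apply Rabs_pos. }
  assert (Hr : Rabs (omega_rhs P zz j) <= R0).
  { unfold omega_rhs, R0. apply abs_le_inv in HG. apply abs_le_inv in HS1. apply abs_le_inv in HS2.
    apply abs_le_inv in HDS. pose proof (Rle_abs (pL P j)). pose proof (Rle_abs (- pL P j)).
    rewrite Rabs_Ropp in H0. apply Rabs_le. lra. }
  assert (HMj : 0 < M P j) by auto.
  unfold Rdiv. rewrite Rabs_mult, Rabs_inv, (Rabs_right (M P j)) by lra.
  eapply Rle_trans; [|apply Rmax_r]. unfold Rdiv. apply Rmult_le_compat_r; auto.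
  left; apply Rinv_0_lt_compat; auto.
Qed.

Lemma flow_lemma P K z (Hsol : is_solution P K z) j (Hj : (j < nN P)%nat) Lj
  (HL : 0 <= Lj) (HLj : forall t l, K t l -> Rabs (omega_rhs P (z t l) j / M P j) <= Lj)
  m a b : K a m -> K b m -> a <= b ->
  Rabs (omega (z b m) j - omega (z a m) j) <= Lj * (b - a) /\
  Defs.sigma (z b m) j = Defs.sigma (z a m) j.
Proof.
  intros Ha Hb Hab.
  destruct Hsol as [HK [_ [_ [Hfl _]]]].
  destruct (Req_dec a b) as [E|E].
  { subst. split; [|reflexivity]. replace (omega (z b m) j - omega (z b m) j) with 0 by ring. rewrite Rabs_R0. nra. }
  assert (Hab' : a < b) by lra.
  assert (Hin : forall s, a <= s <= b -> K s m) by (intros s Hs; exact (D2 K HK a b s m Ha Hb Hs)).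
  destruct (Hfl m) as [Hac Hint].
  assert (Hip : forall t, a < t < b -> interior_pt (fun s => K s m) t).
  { intros t Ht. exists (Rmin (t - a) (b - t)). split. unfold Rmin; destruct Rle_dec; lra.
    intros s Hs. apply Hin. apply Rlt_le, abs_le_inv in Hs.
    pose proof (Rmin_l (t-a) (b-t)). pose proof (Rmin_r (t-a) (b-t)). lra. }
  destruct Hint as [_ HN]. { exists ((a+b)/2). apply Hip. lra. }
  set (N := fun t => interior_pt (fun s => K s m) t /\
           ~ (forall c, relevant P c -> derivable_pt_lim (fun s => proj c (z s m)) t (fmap P (z t m) c))) in HN.
  assert (Hder : forall t, a < t < b -> ~ N t ->
     forall c, relevant P c -> derivable_pt_lim (fun s => proj c (z s m)) t (fmap P (z t m) c)).
  { intros t Ht Hn. apply NNPP. intro Hc. apply Hn. split; auto. }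
  split.
  - apply (ac_abs (fun s => proj (Comega j) (z s m)) a b Lj N Hab HL (Hac a b Hab Hin (Comega j) Hj) HN).
    intros t Ht Hn. exists (fmap P (z t m) (Comega j)). split.
      apply Hder; auto. simpl; auto. simpl. apply HLj. apply Hin; lra.
  - assert (Rabs (proj (Csig j) (z b m) - proj (Csig j) (z a m)) <= 0 * (b - a)).
    { apply (ac_abs (fun s => proj (Csig j) (z s m)) a b 0 N Hab (Rle_refl 0) (Hac a b Hab Hin (Csig j) Hj) HN).
      intros t Ht Hn. exists (fmap P (z t m) (Csig j)). split.
        apply Hder; auto. simpl; auto. simpl. rewrite Rabs_R0; lra. }
    simpl in H. pose proof (Rabs_pos (Defs.sigma (z b m) j - Defs.sigma (z a m) j)).
    assert (Rabs (Defs.sigma (z b m) j - Defs.sigma (z a m) j) = 0) by lra.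
    destruct (Req_dec (Defs.sigma (z b m) j) (Defs.sigma (z a m) j)); auto. exfalso. apply Rabs_no_R0 in H1; lra.
Qed.

Lemma per_j P (HP : standing P) K z (Hsol : is_solution P K z) (Hbd : bounded_sol P K z)
  j (Hj : (j < nN P)%nat) :
  exists tau, 0 < tau /\ forall s s', sigma_change K z j s -> sigma_change K z j s' ->
     s < s' -> tau <= s' - s.
Proof.
  destruct (rhs_bound P HP K z Hbd j Hj) as [Lj [HL HLj]].
  pose proof (flow_lemma P K z Hsol j Hj Lj HL HLj) as FL.
  assert (Hw : 0 < w0 P j /\ w0 P j < w1 P j) by (destruct HP as [_ [_ [_ [_ [_ [_ [_ [_ Hw]]]]]]]]; auto).
  set (g := w1 P j - w0 P j).
  assert (Hg : 0 < g) by (unfold g; lra).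
  exists (g / (Lj + 1)). split. apply Rdiv_lt_0_compat; lra.
  intros s s' [l [Hs1 [Hs2 Hsc]]] [l' [Hs1' [Hs2' Hsc']]] Hss'.
  pose proof Hsol as Hsol'.
  destruct Hsol' as [HK [_ [_ [_ Hjmp]]]].
  assert (Hll : (S l <= l')%nat).
  { destruct (Nat.le_gt_cases (S l) l') as [|Hc]; auto.
    destruct (Nat.eq_dec l' l) as [E|E].
    - subst l'. pose proof (D4 K HK s' s l Hs1' Hs2' Hs2). lra.
    - pose proof (D1 K HK s' s l' (S l) Hs1' Hs2 ltac:(lia)). lra. }
  set (Pc := fun m => (S l <= m)%nat /\ exists r, K r m /\ K r (S m) /\
                Defs.sigma (z r (S m)) j <> Defs.sigma (z r m) j).
  destruct (min_ex Pc l') as [ms [[Hms1 [rs [Hr1 [Hr2 Hr3]]]] Hmin]].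
  { split; auto. exists s'. auto. }
  assert (Hmsl : (ms <= l')%nat).
  { destruct (Nat.le_gt_cases ms l'); auto. exfalso. apply (Hmin l'); auto. split; auto. exists s'; auto. }
  set (s0 := Defs.sigma (z s (S l)) j). set (W0 := omega (z s (S l)) j).
  assert (Inv : forall d m, m = (S l + d)%nat -> (m <= ms)%nat -> forall r, K r m -> s <= r ->
     Defs.sigma (z r m) j = s0 /\ Rabs (omega (z r m) j - W0) <= Lj * (r - s)).
  { induction d; intros m Hm Hmle r Hr Hsr.
    - subst m. rewrite Nat.add_0_r in Hr |- *. destruct (FL (S l) s r Hs2 Hr Hsr) as [A1 A2]. auto.
    - subst m. rewrite <- plus_n_Sm in *. rename Hr into Hrm.
      assert (Hq : exists q, K q (S l + d)%nat /\ K q (S (S l + d)%nat)).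
      { apply (D3 K HK r (S (S l + d)%nat)). exact Hrm. lia. }
      destruct Hq as [q [Hq1 Hq2]].
      assert (Hsq : s <= q) by (apply (Dge K HK s q l (S l + d)); auto; lia).
      assert (Hqr : q <= r) by (apply (D4 K HK q r (S l + d)); auto).
      destruct (IHd (S l + d)%nat eq_refl ltac:(lia) q Hq1 Hsq) as [I1 I2].
      destruct (Hjmp q (S l + d)%nat Hq1 Hq2) as [_ Hg'].
      assert (Hsq' : Defs.sigma (z q (S (S l + d)%nat)) j = Defs.sigma (z q (S l + d)%nat) j).
      { apply NNPP. intro Hc. apply (Hmin (S l + d)%nat). lia. split. lia. exists q. auto. }
      assert (Hoq : omega (z q (S (S l + d)%nat)) j = omega (z q (S l + d)%nat) j) by (rewrite Hg'; reflexivity).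
      destruct (FL (S (S l + d)%nat) q r Hq2 Hrm Hqr) as [F1 F2].
      split. congruence.
      rewrite Hoq in F1.
      pose proof (Rabs_triang (omega (z r (S (S l + d)%nat)) j - omega (z q (S l + d)%nat) j) (omega (z q (S l + d)%nat) j - W0)).
      replace (omega (z r (S (S l + d)%nat)) j - omega (z q (S l + d)%nat) j + (omega (z q (S l + d)%nat) j - W0))
        with (omega (z r (S (S l + d)%nat)) j - W0) in H by ring.
      assert (Lj * (r - s) = Lj * (r - q) + Lj * (q - s)) by ring. lra. }
  assert (Hsrs : s <= rs) by (apply (Dge K HK s rs l ms); auto).
  assert (Hrss : rs <= s').
  { destruct (Nat.eq_dec ms l') as [E|E].
    - subst ms. apply (D4 K HK rs s' l'); auto.
    - apply (Dge K HK rs s' ms l'); auto. lia. }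
  destruct (Inv (ms - S l)%nat ms ltac:(lia) (le_n _) rs Hr1 Hsrs) as [I1 I2].
  destruct (Hjmp s l Hs1 Hs2) as [_ Hgs].
  assert (Hs0 : s0 = gsig P (z s l) j) by (unfold s0; rewrite Hgs; reflexivity).
  assert (HW0 : W0 = omega (z s l) j) by (unfold W0; rewrite Hgs; reflexivity).
  assert (Hch0 : gsig P (z s l) j <> Defs.sigma (z s l) j) by (rewrite <- Hs0; unfold s0; rewrite Hgs in Hsc |- *; exact Hsc).
  destruct (Hjmp rs ms Hr1 Hr2) as [_ Hgr].
  assert (Hch1 : gsig P (z rs ms) j <> Defs.sigma (z rs ms) j) by (rewrite Hgr in Hr3; exact Hr3).
  assert (Hgap : g <= Rabs (omega (z rs ms) j - W0)).
  { apply gsig_change in Hch0; auto. apply gsig_change in Hch1; auto.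
    rewrite HW0. unfold g.
    destruct Hch0 as [[A1 [A2 A3]]|[A1 [A2 A3]]]; destruct Hch1 as [[B1 [B2 B3]]|[B1 [B2 B3]]].
    - exfalso. apply (sgn_nz (omega (z s l) j)). congruence.
    - pose proof (Rabs_triang_inv (omega (z s l) j) (omega (z rs ms) j)).
      rewrite Rabs_minus_sym in H. lra.
    - pose proof (Rabs_triang_inv (omega (z rs ms) j) (omega (z s l) j)). lra.
    - exfalso. apply (sgn_nz (omega (z rs ms) j)). congruence. }
  assert (Lj * (rs - s) <= Lj * (s' - s)) by (apply Rmult_le_compat_l; lra).
  assert (g / (Lj + 1) * (Lj + 1) = g) by (field; lra).
  assert (g <= (Lj + 1) * (s' - s)) by nra.
  apply (Rmult_le_reg_r (Lj + 1)). lra. nra.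
Qed.

Theorem proposition1 (P : params) (HP : standing P)
  (K : R -> nat -> Prop) (z : R -> nat -> state)
  (Hsol : is_solution P K z) (Hcomp : complete K) (Hbd : bounded_sol P K z) :
  exists tau, 0 < tau /\
    forall j, (j < nN P)%nat ->
      forall s0 s s', sigma_change K z j s0 -> sigma_change K z j s ->
        sigma_change K z j s' -> s0 < s -> s < s' -> tau <= s' - s.
Proof.
  destruct (fin_min (fun j c => forall s s', sigma_change K z j s -> sigma_change K z j s' ->
     s < s' -> c <= s' - s) (nN P)) as [c [Hc Hq]].
  - intros j c0 c' H0 Hc' s s' H1 H2 H3. specialize (H0 s s' H1 H2 H3). lra.
  - intros j Hj. exact (per_j P HP K z Hsol Hbd j Hj).
  - exists c. split; auto. intros j Hj s0 s s' _ H1 H2 _ H3. exact (Hq j Hj s s' H1 H2 H3).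
Qed.
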